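(* For all $l\in\mathbb{N}$ the coefficients of the expansion in the context satisfy $$\tilde c_{4l-3,\,1-2l}=0,\qquad \tilde c_{4l-1,\,-2l}=\Big(-\frac14\Big)^{l-1}l\,\tilde c_{3,-2}^{\,l}=-\frac{l\,b^{2l}(a^2+1)^l}{4^{2l-1}}.$$ Equivalently, $\sum_{n\ge0}\tilde c_{2n-1,-n}x^n=\dfrac{Cx^2}{(1+Cx^2/4)^2}$ with $C=\tilde c_{3,-2}=-b^2(a^2+1)/4$.
   Context: Consider the degenerate third Painlevé equation with $\varepsilon=+1$: $u''=\frac{(u')^2}{u}-\frac{u'}{\tau}+\frac{1}{\tau}(-8u^2+2ab)+\frac{b^2}{u}$, where $b\in\mathbb{R}\setminus\{0\}$, $a\in\mathbb{C}$. It has a one-parameter family of solutions, defined for $|\arg\tau|<\pi$ with the principal branch of $\ln$, admitting the expansion (convergent near $\tau=0$) $$u(\tau)=\sum_{k=0}^{\infty}\tau^{2k-1}\sum_{m=-2\lfloor k/2\rfloor}^{\infty}\tilde c_{2k-1,m}(\ln\tau)^{-m},\qquad \tilde c_{-1,0}=\tilde c_{-1,1}=0,\ \tilde c_{-1,2}=-\tfrac14,$$ where $\tilde c_{-1,3}\in\mathbb{C}$ is a free parameter and all other coefficients $\tilde c_{2k-1,m}$ are uniquely determined by $\tilde c_{-1,3}$, $a$, $b$ by substituting the expansion into the equation (coefficients with $m<-2\lfloor k/2\rfloor$ are zero). *)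

(* Defs.v *)
From HB Require Import structures.
From mathcomp Require Import all_boot all_order all_algebra.
From mathcomp Require Import complex.
From mathcomp Require Import reals.
Set Implicit Arguments. Unset Strict Implicit. Unset Printing Implicit Defensive.
Import Order.TTheory GRing.Theory Num.Theory.
Local Open Scope ring_scope.

(* A family  c : nat -> int -> R[i]  with  c k m = \tilde c_{2k-1, m}.
   Writing X = tau^2 ln(tau), Y = (ln tau)^{-1}, one has
     tau^{2k-1} (ln tau)^{-m} = tau^{-1} X^k Y^(m+k),
   so u = tau^{-1} F(X,Y) with F the formal double power series whose
   coefficient of X^k Y^j is  c k (j - k)  (this uses that the support
   condition m >= -2 floor(k/2) implies m + k >= 0). *)
Section Expansion.
Variable R : realType.
Local Notation C := R[i].

Definition coefF (c : nat -> int -> C) (k j : nat) : C := c k (j%:Z - k%:Z).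

Definition pmul (f g : nat -> nat -> C) (k j : nat) : C :=
  \sum_(k1 < k.+1) \sum_(j1 < j.+1) f k1 j1 * g (k - k1)%N (j - j1)%N.

(* If v = tau^{-1} G(X,Y) then (tau d/dtau) v = tau^{-1} (Dop G)(X,Y):
   tau d/dtau (tau^{2k-1} L^(k-j)) = (2k-1) tau^{2k-1} L^(k-j) + (k-j) tau^{2k-1} L^(k-j-1). *)
Definition Dop (f : nat -> nat -> C) (k j : nat) : C :=
  ((2 * k)%:R - 1) * f k j +
  (if j is j'.+1 then (k%:Z - j'%:Z)%:~R * f k j' else 0).

(* multiplication by tau^2 = X Y *)
Definition shiftXY (f : nat -> nat -> C) (k j : nat) : C :=
  match k, j with k'.+1, j'.+1 => f k' j' | _, _ => 0 end.

(* The degenerate PIII (eps = +1)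
     u'' = u'^2/u - u'/tau + (-8u^2 + 2ab)/tau + b^2/u
   multiplied by tau^2 u and written with theta = tau d/dtau reads
     u theta^2 u - (theta u)^2 + 8 tau u^3 - 2ab tau u - b^2 tau^2 = 0;
   substituting u = tau^{-1} F and multiplying by tau^2:
     F Dop^2 F - (Dop F)^2 + 8 F^3 - 2ab XY F - b^2 X^2 Y^2 = 0.
   [solves_PIII a b c] states that the formal expansion with coefficients c
   satisfies this identity coefficientwise. *)
Definition solves_PIII (a : C) (b : R) (c : nat -> int -> C) : Prop :=
  let F := coefF c in
  forall k j : nat,
    pmul F (Dop (Dop F)) k j - pmul (Dop F) (Dop F) k j
    + 8 * pmul F (pmul F F) k j
    - 2 * a * (b%:C)%C * shiftXY F k j
    - ((b%:C)%C) ^+ 2 * (if (k == 2)%N && (j == 2)%N then 1 else 0) = 0.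

Definition expansion_shape (c : nat -> int -> C) : Prop :=
  (forall (k : nat) (m : int), m < - (2 * (k %/ 2)%N)%:Z -> c k m = 0)
  /\ c 0%N 0 = 0 /\ c 0%N 1 = 0 /\ c 0%N 2 = - 4^-1.

End Expansion.

(* Main.v *)
Require Import Defs.
From HB Require Import structures.
From mathcomp Require Import all_boot all_order all_algebra.
From mathcomp Require Import complex reals ring lra zify.
Import Order.TTheory GRing.Theory Num.Theory.
Local Open Scope ring_scope.
Section Aux.
Variable R : realType.
Local Notation C := R[i].
Implicit Types (f g : nat -> nat -> C).

Definition Ex (a : C) (b : R) f k j : C :=
    pmul f (Dop (Dop f)) k j - pmul (Dop f) (Dop f) k j
    + 8 * pmul f (pmul f f) k j
    - 2 * a * (b%:C)%C * shiftXY f k j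
    - ((b%:C)%C) ^+ 2 * (if (k == 2)%N && (j == 2)%N then 1 else 0).

Lemma solvesE a b c : solves_PIII a b c -> forall k j, Ex a b (coefF c) k j = 0.
Proof. by move=> H k j; apply: H. Qed.

Lemma pmul0 f g k : pmul f g k 0 = \sum_(p < k.+1) f p 0 * g (k - p)%N 0.
Proof. by apply: eq_bigr => p _; rewrite big_ord1 /=. Qed.

Lemma pmul1 f g k : pmul f g k 1 =
  \sum_(p < k.+1) (f p 0 * g (k - p)%N 1 + f p 1 * g (k - p)%N 0).
Proof. by apply: eq_bigr => p _; rewrite big_ord_recr big_ord1 /=. Qed.

Definition a_ (n : nat) : C := (2 * n)%:R - 1.

Lemma Dop0 f k : Dop f k 0 = a_ k * f k 0.
Proof. by rewrite /Dop addr0. Qed.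

Lemma DopS f k j : Dop f k j.+1 = a_ k * f k j.+1 + (k%:R - j%:R) * f k j.
Proof. by rewrite /Dop intrB. Qed.

Lemma sum_ind (x : C) (K m : nat) :
  \sum_(i < K) (if (i : nat) == m then x else 0) = if (m < K)%N then x else 0.
Proof.
elim: K => [|K IH]; first by rewrite big_ord0.
rewrite big_ord_recr /= IH.
case: eqP => e.
- by rewrite -e ltnn ltnSn add0r.
- have -> : (m < K.+1)%N = (m < K)%N by apply/idP/idP; lia.
  by rewrite addr0.
Qed.

Lemma telescope (u : nat -> C) N : \sum_(i < N) (u i.+1 - u i) = u N - u 0%N.
Proof.
elim: N => [|N IH]; first by rewrite big_ord0 subrr.
rewrite big_ord_recr /= IH; ring.
Qed.

Lemma sum_even (phi : nat -> C) m : (forall p, odd p -> phi p = 0) ->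
  \sum_(p < (2 * m).+1) phi p = \sum_(i < m.+1) phi (2 * i)%N.
Proof.
move=> Hodd; elim: m => [|m IH]; first by rewrite !big_ord1.
have -> : (2 * m.+1).+1 = ((2 * m).+1).+2 by lia.
rewrite big_ord_recr big_ord_recr /= IH [in RHS]big_ord_recr /= (Hodd (2 * m).+1); last by rewrite /= oddM.
rewrite addr0; congr (_ + phi _); lia.
Qed.

Definition Q (s : nat -> C) (k : nat) : C :=
  \sum_(p < k.+1) s p * (a_ (k - p) * (a_ (k - p) * s (k - p)%N))
  - \sum_(p < k.+1) (a_ p * s p) * (a_ (k - p) * s (k - p)%N)
  + 8 * \sum_(p < k.+1) s p * \sum_(q < (k - p).+1) s q * s (k - p - q)%N.

Lemma E0 a b f k : Ex a b f k 0 = Q (fun p => f p 0) k.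
Proof.
rewrite /Ex /Q !pmul0.
have -> : shiftXY f k 0 = 0 by case: k.
rewrite andbF !mulr0 !subr0.
congr (_ - _ + 8 * _).
- by apply: eq_bigr => p _; rewrite !Dop0.
- by apply: eq_bigr => p _; rewrite !Dop0.
- by apply: eq_bigr => p _; rewrite pmul0.
Qed.

Definition tau (w : C) (i : nat) : C := -4 * i%:R * w ^+ i.
Definition tt (w : C) (m : nat) : C := if odd m then 0 else tau w m./2.

Lemma tt_even w m : tt w (2 * m) = tau w m.
Proof. by rewrite /tt mul2n odd_double doubleK. Qed.

Lemma tt_odd w m : odd m -> tt w m = 0.
Proof. by rewrite /tt => ->. Qed.

Definition Vf (m x : C) : C := m * x * (x - 1) / 2 - (x - 1) * x * (2 * x - 1) / 6.

Lemma inner w m : \sum_(j < m.+1) tau w j * tau w (m - j) =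
  16 * w ^+ m * ((m%:R ^+ 3 - m%:R) / 6).
Proof.
rewrite (eq_bigr (fun j : 'I_m.+1 => 16 * w ^+ m * (Vf m%:R j.+1%:R - Vf m%:R j%:R))); last first.
  move=> j _; have hj : (j <= m)%N by rewrite -ltnS.
  have Ew : w ^+ m = w ^+ j * w ^+ (m - j) by rewrite -exprD subnKC.
  rewrite /tau /Vf (natrB _ hj) Ew -natr1; by field.
rewrite -mulr_sumr (telescope (fun j => Vf m%:R j%:R)) /Vf -natr1; by field.
Qed.

Definition Uf (n x : C) : C :=
  -256/3 * x^+5 + 256 * n * x^+4 + 544/3 * x^+4 - 256 * n^+2 * x^+3 - 448 * n * x^+3
  - 320/3 * x^+3 + 256/3 * n^+3 * x^+2 + 352 * n^+2 * x^+2 + 608/3 * n * x^+2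
  + 32/3 * x^+2 - 32/3 * n * x - 96 * n^+2 * x - 256/3 * n^+3 * x.

Lemma Qt w n : Q (tt w) (2 * n) = 0.
Proof.
rewrite /Q.
rewrite (sum_even (fun p => tt w p * (a_ (2 * n - p) * (a_ (2 * n - p) * tt w (2 * n - p)%N)))); last first.
  by move=> p hp; rewrite tt_odd // mul0r.
rewrite (sum_even (fun p => a_ p * tt w p * (a_ (2 * n - p) * tt w (2 * n - p)%N))); last first.
  by move=> p hp; rewrite tt_odd // mulr0 mul0r.
rewrite (sum_even (fun p => tt w p * \sum_(q < (2 * n - p).+1) tt w q * tt w (2 * n - p - q)%N)); last first.
  by move=> p hp; rewrite tt_odd // mul0r.
rewrite mulr_sumr -sumrB -big_split /=.
rewrite (eq_bigr (fun i : 'I_n.+1 => w ^+ n * (Uf n%:R i.+1%:R - Uf n%:R i%:R))); last first.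
  move=> i _; have hi : (i <= n)%N by rewrite -ltnS.
  rewrite -!mulnBr !tt_even.
  rewrite (sum_even (fun q => tt w q * tt w (2 * (n - i) - q)%N)); last first.
    by move=> q hq; rewrite tt_odd // mul0r.
  under eq_bigr do rewrite -mulnBr !tt_even.
  have Ew : w ^+ n = w ^+ i * w ^+ (n - i) by rewrite -exprD subnKC.
  rewrite inner /tau /a_ /Uf !natrM (natrB _ hi) Ew -natr1.
  by field.
rewrite -mulr_sumr (telescope (fun j => Uf n%:R j%:R)) /Uf -natr1; by field.
Qed.

Lemma Qdiff (s t : nat -> C) n : (2 < n)%N ->
  (forall m, (m < n)%N -> s m = t m) -> (forall m, (m < 2)%N -> t m = 0) ->
  Q s n.+2 = Q t n.+2 + (a_ n - a_ 2) ^+ 2 * s 2%N * (s n - t n).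
Proof.
move=> hn agree t0.
have s0 : forall m, (m < 2)%N -> s m = 0.
  by move=> m hm; rewrite agree ?t0 //; lia.
have E3 : \sum_(p < n.+3) s p * \sum_(q < (n.+2 - p).+1) s q * s (n.+2 - p - q)%N
        = \sum_(p < n.+3) t p * \sum_(q < (n.+2 - p).+1) t q * t (n.+2 - p - q)%N.
  apply: eq_bigr => p _; rewrite !mulr_sumr; apply: eq_bigr => q _.
  have hp := ltn_ord p; have hq := ltn_ord q.
  case: (ltnP p 2) => h1; first by rewrite (s0 p) // (t0 p) // !mul0r.
  case: (ltnP q 2) => h2; first by rewrite (s0 q) // (t0 q) // !mul0r !mulr0.
  case: (ltnP (n.+2 - p - q)%N 2) => h3; first by rewrite (s0 (n.+2 - p - q)%N) // (t0 (n.+2 - p - q)%N) // !mulr0.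
  by rewrite !agree //; lia.
rewrite /Q E3.
rewrite -!sumrB.
rewrite (eq_bigr (fun p : 'I_n.+3 =>
   (t p * (a_ (n.+2 - p) * (a_ (n.+2 - p) * t (n.+2 - p)%N))
     - a_ p * t p * (a_ (n.+2 - p) * t (n.+2 - p)%N))
   + (if (p : nat) == 2%N then (a_ n ^+ 2 - a_ 2 * a_ n) * s 2%N * (s n - t n) else 0)
   + (if (p : nat) == n then (a_ 2 ^+ 2 - a_ n * a_ 2) * s 2%N * (s n - t n) else 0))); last first.
  move=> p _; have hp := ltn_ord p.
  case: eqP => [e2|n2].
    case: eqP => [en|_]; first lia.
    rewrite e2 (_ : (n.+2 - 2 = n)%N); last lia.
    rewrite -(agree 2%N) //; ring.
  case: eqP => [en|nn].
    rewrite en (_ : (n.+2 - n = 2)%N); last lia.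
    rewrite -(agree 2%N) //; ring.
  rewrite !addr0.
  case: (ltnP p 2) => h1; first by rewrite (s0 p) // (t0 p) //; ring.
  case: (ltnP p n) => h2.
    by rewrite (agree _ h2) (agree (n.+2 - p)%N) //; lia.
  by rewrite (s0 (n.+2 - p)%N) ?(t0 (n.+2 - p)%N); [ring|lia|lia].
rewrite !big_split /= !sum_ind.
rewrite (_ : (2 < n.+3)%N = true); last lia.
rewrite (_ : (n < n.+3)%N = true); last lia.
ring.
Qed.

Lemma gind (g : nat -> C) : (forall k, Q g k = 0) -> g 0%N = 0 -> g 1%N = 0 ->
  (forall m, odd m -> g m = 0) -> g 2%N != 0 ->
  forall m, g m = tt (- g 2%N / 4) m.
Proof.
move=> HQ g0 g1 godd g2.
set w := - g 2%N / 4.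
elim/ltn_ind => n IH.
case hod: (odd n); first by rewrite godd // tt_odd.
have [hn|hn] : (n <= 2 \/ 2 < n)%N by lia.
  have : (n = 0 \/ n = 2)%N.
    by have := odd_double_half n; rewrite hod add0n -mul2n => hd; lia.
  case=> ->; first by rewrite g0 /tt /tau /=; ring.
  by rewrite /tt /tau /w /=; field.
have := @Qdiff g (tt w) n hn IH.
have t0 : forall m, (m < 2)%N -> tt w m = 0.
  by move=> [|[|m]] //= _; rewrite /tt /tau /=; ring.
move=> /(_ t0).
rewrite HQ.
have -> : n.+2 = (2 * (n./2).+1)%N.
  by rewrite -[in LHS](odd_double_half n) hod add0n mul2n doubleS.
rewrite Qt add0r => /esym /eqP.
rewrite !mulf_eq0 (negbTE g2) orbF !subr_eq0 orbb => /orP [|/eqP //].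
rewrite /a_ => /eqP/(congr1 (fun x => x + 1)).
rewrite !subrK => /eqP; rewrite eqr_nat; lia.
Qed.

Lemma E1 a b f m : (2 < m)%N -> (forall p, (p < m)%N -> f p 0%N = 0) -> f 0%N 1%N = 0 ->
  Ex a b f m.+1 1 = f m 0%N * f 1%N 1%N * (1 + a_ m ^+ 2 - 2 * a_ m)
                    - 2 * a * (b%:C)%C * f m 0%N.
Proof.
move=> hm hz f01.
have f00 : f 0%N 0%N = 0 by apply: hz; lia.
have f10 : f 1%N 0%N = 0 by apply: hz; lia.
rewrite /Ex !pmul1.
have -> : shiftXY f m.+1 1 = f m 0%N by [].
rewrite (_ : (1 == 2)%N = false) // andbF mulr0 subr0.
have S1 : \sum_(p < m.+2) (f p 0%N * Dop (Dop f) (m.+1 - p) 1 + f p 1%N * Dop (Dop f) (m.+1 - p) 0)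
   = \sum_(p < m.+2) ((if (p : nat) == m then f m 0%N * f 1%N 1%N else 0)
                    + (if (p : nat) == 1%N then f 1%N 1%N * (a_ m ^+ 2 * f m 0%N) else 0)).
  apply: eq_bigr => p _; have hp := ltn_ord p.
  rewrite !DopS !Dop0.
  case: eqP => [e1|n1].
    case: eqP => [e2|_]; first lia.
    rewrite e1 (_ : (m.+1 - m = 1)%N); last lia.
    rewrite f10 /a_; ring.
  case: eqP => [e2|n2].
    rewrite e2 (_ : (m.+1 - 1 = m)%N); last lia.
    rewrite f10 /a_; ring.
  have [h0|h0] : ((p : nat) = 0 \/ 0 < p)%N by lia.
    by rewrite h0 f00 f01; ring.
  have [h1|h1] : ((p : nat) = m.+1 \/ p < m)%N by lia.
    by rewrite h1 subnn f00 f01; ring.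
  by rewrite (hz p) // (hz (m.+1 - p)%N); [ring|lia].
have S2 : \sum_(p < m.+2) (Dop f p 0%N * Dop f (m.+1 - p) 1 + Dop f p 1%N * Dop f (m.+1 - p) 0)
   = \sum_(p < m.+2) ((if (p : nat) == m then a_ m * f m 0%N * f 1%N 1%N else 0)
                    + (if (p : nat) == 1%N then f 1%N 1%N * (a_ m * f m 0%N) else 0)).
  apply: eq_bigr => p _; have hp := ltn_ord p.
  rewrite !DopS !Dop0.
  case: eqP => [e1|n1].
    case: eqP => [e2|_]; first lia.
    rewrite e1 (_ : (m.+1 - m = 1)%N); last lia.
    rewrite f10 /a_; ring.
  case: eqP => [e2|n2].
    rewrite e2 (_ : (m.+1 - 1 = m)%N); last lia.
    rewrite f10 /a_; ring.
  have [h0|h0] : ((p : nat) = 0 \/ 0 < p)%N by lia.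
    by rewrite h0 f00 f01; ring.
  have [h1|h1] : ((p : nat) = m.+1 \/ p < m)%N by lia.
    by rewrite h1 subnn f00 f01; ring.
  by rewrite (hz p) // (hz (m.+1 - p)%N); [ring|lia].
have S3 : \sum_(p < m.+2) (f p 0%N * pmul f f (m.+1 - p) 1 + f p 1%N * pmul f f (m.+1 - p) 0) = 0.
  apply: big1 => p _; have hp := ltn_ord p.
  have -> : pmul f f (m.+1 - p) 0 = 0.
    rewrite pmul0; apply: big1 => q _; have hq := ltn_ord q.
    have [hq'|hq'] : (q < m \/ m <= q)%N by lia.
      by rewrite hz // mul0r.
    by rewrite (hz (m.+1 - p - q)%N) ?mulr0 //; lia.
  rewrite mulr0 addr0.
  have [hp'|hp'] : (p < m \/ m <= p)%N by lia.
    by rewrite hz // mul0r.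
  rewrite pmul1 big1 ?mulr0 // => q _; have hq := ltn_ord q.
  by rewrite !hz ?mul0r ?mulr0 ?addr0 //; lia.
rewrite S1 S2 S3 !big_split /= !sum_ind.
rewrite (_ : (m < m.+2)%N = true); last lia.
rewrite (_ : (1 < m.+2)%N = true); last lia.
ring.
Qed.

Lemma f11val a b f : f 0%N 0%N = 0 -> f 0%N 1%N = 0 -> f 1%N 0%N = 0 -> f 0%N 2%N = - 4^-1 ->
  Ex a b f 1 3 = 0 -> f 1%N 1%N = a * (b%:C)%C / 2.
Proof.
move=> f00 f01 f10 f02.
rewrite /Ex /pmul /shiftXY !big_ord_recr !big_ord0 /=.
rewrite ?subSS ?subn0 ?subnn ?sub0n !DopS !Dop0 /= f00 f01 f10 f02 /a_ => H.
have : a * (b%:C)%C / 2 - f 1%N 1%N = 0.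
  apply: (etrans _ H); by field.
by move/eqP; rewrite subr_eq0 => /eqP.
Qed.

Lemma f20val a b f : f 0%N 0%N = 0 -> f 0%N 1%N = 0 -> f 1%N 0%N = 0 -> f 0%N 2%N = - 4^-1 ->
  Ex a b f 2 2 = 0 -> 4 * f 2%N 0%N = - 2 * a * (b%:C)%C * f 1%N 1%N - (b%:C)%C ^+ 2.
Proof.
move=> f00 f01 f10 f02.
rewrite /Ex /pmul /shiftXY !big_ord_recr !big_ord0 /=.
rewrite ?subSS ?subn0 ?subnn ?sub0n !DopS !Dop0 /= f00 f01 f10 f02 /a_ => H.
have : (- 2 * a * (b%:C)%C * f 1%N 1%N - (b%:C)%C ^+ 2) - 4 * f 2%N 0%N = 0.
  apply: (etrans _ H); by field.
by move/eqP; rewrite subr_eq0 => /eqP.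
Qed.
End Aux.
Arguments solvesE {R a b c}.
Arguments E0 {R} a b f k.
Arguments gind {R g}.
Arguments E1 {R} a b {f m}.
Arguments f11val {R a b f}.
Arguments f20val {R a b f}.
Arguments tt_even {R}.
Arguments Q {R}.
Arguments tt {R}.
Arguments tau {R}.
Arguments a_ {R}.

Theorem mainTheorem4 (R : realType) (a : R[i]) (b : R) (c : nat -> int -> R[i]) :
  b != 0 ->
  expansion_shape c ->
  solves_PIII a b c ->
  forall l : nat, (0 < l)%N ->
    c (2 * l - 1)%N (1 - 2 * l%:Z) = 0 /\
    c (2 * l)%N (- (2 * l%:Z)) = (- 4^-1) ^+ (l - 1) * l%:R * (c 2%N (-2)) ^+ l /\
    c (2 * l)%N (- (2 * l%:Z))
      = - (l%:R * ((b%:C)%C) ^+ (2 * l) * (a ^+ 2 + 1) ^+ l) / 4 ^+ (2 * l - 1).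
Proof.
move=> bn0 [shz [c00 [c01 c02]]] Hs l hl.
have HE := solvesE Hs.
set f := coefF c.
have bC : (b%:C)%C != 0 by apply: contra bn0 => /eqP [] ->.
have f00 : f 0%N 0%N = 0 by rewrite /f /coefF subrr.
have f01 : f 0%N 1%N = 0 by rewrite /f /coefF subr0.
have f02 : f 0%N 2%N = - 4^-1 by rewrite /f /coefF subr0.
have fodd : forall k, odd k -> f k 0%N = 0.
  move=> k hk; rewrite /f /coefF; apply: shz; rewrite divn2.
  have := odd_double_half k; rewrite hk -mul2n; lia.
have f10 : f 1%N 0%N = 0 by apply: fodd.
have f11 := f11val f00 f01 f10 f02 (HE 1%N 3%N).
have f20e := f20val f00 f01 f10 f02 (HE 2%N 2%N).
rewrite f11 in f20e.
have f20 : f 2%N 0%N = - 4^-1 * ((b%:C)%C ^+ 2 * (a ^+ 2 + 1)).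
  apply: (mulfI (_ : (4 : R[i]) != 0)); first by rewrite pnatr_eq0.
  by rewrite f20e; field.
have HQ : forall k, Q (fun p => f p 0%N) k = 0.
  by move=> k; rewrite -(E0 a b); apply: HE.
have key : forall m, f m 0%N = tt (- f 2%N 0%N / 4) m.
  have [/eqP g2|g2] := boolP (f 2%N 0%N == 0); last first.
    by apply: (@gind R (fun p => f p 0%N)) => //; apply: fodd.
  have tz : forall m, tt (- f 2%N 0%N / 4) m = 0.
    move=> m; rewrite g2 /tt; case: (odd m) => //; rewrite /tau.
    case: (m./2) => [|i]; first by ring.
    by rewrite oppr0 mul0r expr0n /= mulr0.
  move=> m; rewrite tz.
  have a0 : a != 0.
    apply/eqP => a0; move: f20; rewrite g2 a0 => /eqP.
    rewrite eq_sym mulf_eq0 oppr_eq0 invr_eq0 pnatr_eq0 /= mulf_eq0 expf_eq0 /=.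
    rewrite (negbTE bC) /= expr0n /= add0r oner_eq0 //.
  elim/ltn_ind: m => m IH.
  have [hm|hm] : (m <= 2 \/ 2 < m)%N by lia.
    by move: hm IH; case: m => [|[|[|m]]] //= _ _; rewrite ?f00 ?f10 ?g2.
  have hz : forall p, (p < m)%N -> f p 0%N = 0 by move=> p hp; rewrite IH // tz.
  have := HE m.+1 1%N; rewrite (E1 a b hm hz f01) f11 => /eqP.
  rewrite (_ : _ - _ = f m 0%N * (a * (b%:C)%C * ((2 * m)%:R - 4) * (2 * m)%:R / 2)); last first.
    by rewrite /a_; field.
  rewrite mulf_eq0 => /orP [/eqP //|].
  rewrite !mulf_eq0 (negbTE a0) (negbTE bC) invr_eq0 pnatr_eq0 /=.
  rewrite (_ : (2 * m)%:R - 4 = (2 * m - 4)%:R :> R[i]); last first.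
    by rewrite natrB; [rewrite natrM| lia].
  rewrite !pnatr_eq0 => /orP [/orP [|]|] /eqP; lia.
have Cl : c (2 * l)%N (- (2 * l%:Z)) = f (2 * l)%N 0%N by rewrite /f /coefF sub0r PoszM.
have C2 : c 2%N (-2) = f 2%N 0%N by rewrite /f /coefF.
case: l hl Cl => [//|l'] _ Cl.
have E2 : c (2 * l'.+1)%N (- (2 * l'.+1%:Z)) =
     (- 4^-1) ^+ (l'.+1 - 1) * l'.+1%:R * (c 2%N (-2)) ^+ l'.+1.
  rewrite Cl C2 key tt_even /tau subSS subn0.
  rewrite (_ : - f 2%N 0%N / 4 = - 4^-1 * f 2%N 0%N); last by field.
  rewrite exprMn exprS; by field.
split; [|split=> //].
  apply: shz.
  rewrite (_ : (2 * l'.+1 - 1 = l' * 2 + 1)%N); last lia.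
  rewrite divnMDl // divn_small // addn0; lia.
rewrite E2 C2 f20 subSS subn0.
have HX : (- 4^-1 : R[i]) ^+ l' * (- 4^-1) ^+ l' = (((4 : R[i]) ^+ 2) ^+ l')^-1.
  by rewrite -exprMn -exprVn; congr (_ ^+ _); field.
rewrite (_ : (2 * l'.+1 - 1 = (2 * l').+1)%N); last lia.
rewrite [X in _ / X]exprS (exprM _ 2 l') (exprM _ 2 l'.+1) [(- 4^-1 * _) ^+ _]exprMn [(- 4^-1) ^+ l'.+1]exprS.
have X0 : ((4 : R[i]) ^+ 2) ^+ l' != 0 by rewrite !expf_neq0 // pnatr_eq0.
set X := ((4 : R[i]) ^+ 2) ^+ l' in HX X0 *.
set Y := (- 4^-1 : R[i]) ^+ l' in HX *.
transitivity (l'.+1%:R * (- 4^-1) * (Y * Y) * ((b%:C)%C ^+ 2 * (a ^+ 2 + 1)) ^+ l'.+1).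
  ring.
rewrite HX exprMn; field.
by rewrite X0.
Qed.
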